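(* Let $b>0$, let $f:[-b,b]\to\mathbb{R}$ be an odd function whose restriction to $[0,b]$ is convex, and let $p:[-b,b]\to[0,\infty)$ be a nondecreasing function that does not vanish on $(-b/3,b]$. Then for every $a\in[-b/3,b)$, \[ f\left(\frac{1}{\int_a^b p(x)\,dx}\int_a^b x\,p(x)\,dx\right)\le\frac{1}{\int_a^b p(x)\,dx}\int_a^b f(x)\,p(x)\,dx. \] *)

(* Defs.v *)
From Stdlib Require Import Reals Lra.
From Coquelicot Require Import Coquelicot.
Open Scope R_scope.

Definition odd_on (b : R) (f : R -> R) : Prop :=
  forall x, -b <= x <= b -> f (- x) = - f x.

Definition convex_on (l u : R) (f : R -> R) : Prop :=
  forall x y t, l <= x <= u -> l <= y <= u -> 0 <= t <= 1 ->
    f (t * x + (1 - t) * y) <= t * f x + (1 - t) * f y.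

Definition nondecr_on (l u : R) (p : R -> R) : Prop :=
  forall x y, l <= x <= u -> l <= y <= u -> x <= y -> p x <= p y.

(* Main.v *)
Require Import Defs.
From Stdlib Require Import Reals Lra.
From Coquelicot Require Import Coquelicot.
Open Scope R_scope.

Lemma ballR (x e y : R) : Rabs (y - x) < e -> ball x e y.
Proof. intros H. exact H. Qed.

Lemma ballR' (x e y : R) : ball x e y -> Rabs (y - x) < e.
Proof. intros H. exact H. Qed.

Lemma sandwich (f : R -> R) a b : a < b ->
  (forall eps, 0 < eps -> exists g1 g2, ex_RInt g1 a b /\ ex_RInt g2 a b /\
     (forall x, a <= x <= b -> g1 x <= f x <= g2 x) /\
     RInt g2 a b - RInt g1 a b < eps) -> ex_RInt f a b.
Proof.
  intros hab H.
  pose (FR := filtermap (Riemann_sum f) (Riemann_fine a b)).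
  assert (FFR : ProperFilter FR) by (apply filtermap_proper_filter, Riemann_fine_filter).
  assert (HD : Riemann_fine a b (fun ptd => pointed_subdiv ptd /\
     SF_h ptd = Rmin a b /\ seq.last (SF_h ptd) (SF_lx ptd) = Rmax a b)).
  { exists (mkposreal 1 Rlt_0_1). intros y _ Hy. exact Hy. }
  assert (Hc : cauchy FR).
  { intros eps.
    assert (e3 : 0 < eps / 3) by (destruct eps; simpl; lra).
    destruct (H (eps/3) e3) as [g1 [g2 [i1 [i2 [hg hgap]]]]].
    exists (RInt g1 a b).
    pose proof (RInt_correct _ _ _ i1) as c1.
    pose proof (RInt_correct _ _ _ i2) as c2.
    unfold is_RInt in c1, c2.
    pose proof (proj1 (filterlim_locally _ _) c1 (mkposreal _ e3)) as d1.
    pose proof (proj1 (filterlim_locally _ _) c2 (mkposreal _ e3)) as d2.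
    clear c1 c2.
    unfold FR, filtermap.
    generalize (filter_and _ _ HD (filter_and _ _ d1 d2)).
    apply filter_imp. intros ptd [[Hp [Hh Hl]] [b1 b2]].
    apply ballR' in b1. apply ballR' in b2. simpl in b1, b2.
    rewrite sign_eq_1 in b1, b2 by lra. change (scal 1 ?x) with (1 * x) in b1, b2. rewrite !Rmult_1_l in b1, b2.
    rewrite Rmin_left in Hh by lra. rewrite Rmax_right in Hl by lra.
    assert (s1 : Riemann_sum g1 ptd <= Riemann_sum f ptd).
    { apply Riemann_sum_le; auto. intros t Ht. rewrite Hl, Hh in Ht. apply hg; lra. }
    assert (s2 : Riemann_sum f ptd <= Riemann_sum g2 ptd).
    { apply Riemann_sum_le; auto. intros t Ht. rewrite Hl, Hh in Ht. apply hg; lra. }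
    apply ballR. simpl.
    apply Rabs_def2 in b1; apply Rabs_def2 in b2. pose proof (cond_pos eps). set (I1 := RInt g1 a b) in *. set (I2 := RInt g2 a b) in *. set (S1 := Riemann_sum g1 ptd) in *. set (S2 := Riemann_sum g2 ptd) in *. set (S := Riemann_sum f ptd) in *. change (Riemann_sum g1 ptd) with S1 in b1. change (Riemann_sum g2 ptd) with S2 in b2. change (Riemann_sum f ptd) with S. apply Rabs_def1; lra. }
  exists (lim FR). apply filterlim_locally. intros eps.
  pose proof (complete_cauchy FR FFR Hc eps) as H0.
  unfold FR, filtermap in H0.
  eapply filter_imp; [|exact H0]. intros ptd Hb.
  rewrite sign_eq_1 by lra. change (scal 1 ?x) with (1*x). rewrite Rmult_1_l. exact Hb.
Qed.

Lemma RI_point (f : R -> R) a : RInt f a a = 0.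
Proof. exact (RInt_point (V := R_CompleteNormedModule) a f). Qed.
Lemma RI_const (c a b : R) : RInt (fun _ => c) a b = c * (b - a).
Proof. rewrite RInt_const. unfold scal; simpl; unfold mult; simpl. ring. Qed.
Lemma RI_Chasles (f : R -> R) a b c : ex_RInt f a b -> ex_RInt f b c ->
  RInt f a b + RInt f b c = RInt f a c.
Proof. intros; now apply (RInt_Chasles (V := R_CompleteNormedModule)). Qed.
Lemma RI_plus (f g : R -> R) a b : ex_RInt f a b -> ex_RInt g a b ->
  RInt (fun x => f x + g x) a b = RInt f a b + RInt g a b.
Proof. intros; now apply (RInt_plus (V := R_CompleteNormedModule)). Qed.
Lemma RI_minus (f g : R -> R) a b : ex_RInt f a b -> ex_RInt g a b ->
  RInt (fun x => f x - g x) a b = RInt f a b - RInt g a b.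
Proof. intros; now apply (RInt_minus (V := R_CompleteNormedModule)). Qed.
Lemma RI_scal (f : R -> R) k a b : ex_RInt f a b ->
  RInt (fun x => k * f x) a b = k * RInt f a b.
Proof. intros; now apply (RInt_scal (V := R_CompleteNormedModule)). Qed.
Lemma ex_plus (f g : R -> R) a b : ex_RInt f a b -> ex_RInt g a b ->
  ex_RInt (fun x => f x + g x) a b.
Proof. intros H1 H2. exact (ex_RInt_plus (V:=R_NormedModule) f g a b H1 H2). Qed.
Lemma ex_minus (f g : R -> R) a b : ex_RInt f a b -> ex_RInt g a b ->
  ex_RInt (fun x => f x - g x) a b.
Proof. intros H1 H2. exact (ex_RInt_minus (V:=R_NormedModule) f g a b H1 H2). Qed.
Lemma ex_scal (f : R -> R) k a b : ex_RInt f a b -> ex_RInt (fun x => k * f x) a b.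
Proof. intros H1. exact (ex_RInt_scal (V:=R_NormedModule) f a b k H1). Qed.
Lemma ex_ext (f g : R -> R) a b : a <= b -> (forall x, a < x < b -> f x = g x) ->
  ex_RInt f a b -> ex_RInt g a b.
Proof. intros hab H. apply ex_RInt_ext. rewrite Rmin_left, Rmax_right by lra. auto. Qed.
Lemma RI_ext (f g : R -> R) a b : a <= b -> (forall x, a < x < b -> f x = g x) ->
  RInt f a b = RInt g a b.
Proof. intros hab H. apply RInt_ext. rewrite Rmin_left, Rmax_right by lra. auto. Qed.

Definition glue (c v : R) (g : R -> R) (x : R) : R := if Rle_dec x c then v else g x.

Lemma mono_step (n : nat) : forall (f : R -> R) a b d, 0 < d -> a <= b ->
  b - a <= INR n * d -> (forall x y, a <= x -> x <= y -> y <= b -> f x <= f y) ->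
  exists g1 g2 : R -> R, ex_RInt g1 a b /\ ex_RInt g2 a b /\
    (forall x, a <= x <= b -> g1 x <= f x <= g2 x) /\
    RInt g2 a b - RInt g1 a b <= d * (f b - f a).
Proof.
  induction n; intros f a b d hd hab hn hf.
  - simpl in hn. assert (b = a) by lra. subst b.
    exists f, f. split; [apply ex_RInt_point|]. split; [apply ex_RInt_point|].
    split; [intros; lra|]. rewrite !RI_point. lra.
  - assert (hfab : f a <= f b) by (apply hf; lra).
    destruct (Rle_dec (b - a) d) as [hs|hs].
    + exists (fun _ => f a), (fun _ => f b).
      split; [apply ex_RInt_const|]. split; [apply ex_RInt_const|].
      split. { intros x hx. split; apply hf; lra. }
      rewrite !RI_const. nra.
    + set (c := a + d).
      rewrite S_INR in hn.
      destruct (IHn f c b d hd ltac:(unfold c; lra) ltac:(unfold c; lra)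
        ltac:(intros; apply hf; unfold c in *; lra)) as [g1 [g2 [i1 [i2 [hg hgap]]]]].
      assert (hac : a <= c) by (unfold c; lra).
      assert (hcb : c <= b) by (unfold c; lra).
      exists (glue c (f a) g1), (glue c (f c) g2).
      assert (E1 : forall v, forall g : R -> R, ex_RInt g c b ->
        ex_RInt (glue c v g) a b /\
        RInt (glue c v g) a b = v * (c - a) + RInt g c b).
      { intros v g ig.
        assert (ia : ex_RInt (glue c v g) a c).
        { apply (ex_ext (fun _ => v)); auto; [|apply ex_RInt_const].
          intros x hx. unfold glue; destruct (Rle_dec x c); auto; lra. }
        assert (ib : ex_RInt (glue c v g) c b).
        { apply (ex_ext g); auto.
          intros x hx. unfold glue; destruct (Rle_dec x c); auto; lra. }
        split. { eapply ex_RInt_Chasles; eauto. }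
        rewrite <- (RI_Chasles _ a c b ia ib).
        rewrite (RI_ext _ (fun _ => v) a c), RI_const; auto.
        2: { intros x hx. unfold glue; destruct (Rle_dec x c); auto; lra. }
        rewrite (RI_ext _ g c b); auto.
        intros x hx. unfold glue; destruct (Rle_dec x c); auto; lra. }
      destruct (E1 (f a) g1 i1) as [j1 e1]. destruct (E1 (f c) g2 i2) as [j2 e2].
      split; auto. split; auto. split.
      { intros x hx. unfold glue; destruct (Rle_dec x c).
        - split; apply hf; lra.
        - apply hg; lra. }
      rewrite e1, e2. unfold c in *. lra.
Qed.

Lemma nondecr_int (f : R -> R) a b : a <= b -> nondecr_on a b f -> ex_RInt f a b.
Proof.
  intros hab hf.
  destruct (Req_dec a b) as [<-|hne]; [apply ex_RInt_point|].
  assert (hfab : f a <= f b) by (apply hf; lra).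
  apply sandwich; [lra|]. intros eps he.
  set (d := eps / (f b - f a + 1)).
  assert (hd : 0 < d) by (unfold d; apply Rdiv_lt_0_compat; lra).
  destruct (INR_archimed d (b - a) hd) as [n hn].
  destruct (mono_step n f a b d hd hab ltac:(lra) ltac:(intros; apply hf; lra))
    as [g1 [g2 [i1 [i2 [hg hgap]]]]].
  exists g1, g2. repeat split; auto; try apply hg; auto.
  eapply Rle_lt_trans; [exact hgap|].
  unfold d. apply (Rmult_lt_reg_r (f b - f a + 1)); [lra|].
  field_simplify; [|lra]. nra.
Qed.

Definition nonincr_on (l u : R) (p : R -> R) : Prop :=
  forall x y, l <= x <= u -> l <= y <= u -> x <= y -> p y <= p x.

Lemma nonincr_int (f : R -> R) a b : a <= b -> nonincr_on a b f -> ex_RInt f a b.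
Proof.
  intros hab hf.
  assert (h : ex_RInt (fun x => - f x) a b).
  { apply nondecr_int; auto. intros x y hx hy hxy. specialize (hf x y hx hy hxy). lra. }
  apply (ex_ext (fun x => -1 * (- f x))); auto; [intros; ring|].
  apply ex_scal; auto.
Qed.

Lemma prod_int (phi p : R -> R) u v : u <= v ->
  (forall x, u <= x <= v -> 0 <= phi x) -> (forall x, u <= x <= v -> 0 <= p x) ->
  nondecr_on u v p -> (nondecr_on u v phi \/ nonincr_on u v phi) ->
  ex_RInt (fun x => phi x * p x) u v.
Proof.
  intros huv h0 hp0 hp [hi|hd].
  - apply nondecr_int; auto. intros x y hx hy hxy.
    apply Rmult_le_compat; auto.
  - assert (e1 : ex_RInt (fun x => phi u * p x) u v) by (apply ex_scal, nondecr_int; auto).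
    assert (e2 : ex_RInt (fun x => (phi u - phi x) * p x) u v).
    { apply nondecr_int; auto. intros x y hx hy hxy.
      apply Rmult_le_compat; auto.
      - assert (phi x <= phi u) by (apply hd; lra). lra.
      - assert (phi y <= phi x) by (apply hd; lra). lra. }
    apply (ex_ext (fun x => phi u * p x - (phi u - phi x) * p x)); auto.
    + intros; ring.
    + apply ex_minus; auto.
Qed.

Lemma valley_int (phi p : R -> R) u v w : u <= v ->
  (forall x, u <= x <= v -> 0 <= phi x) -> (forall x, u <= x <= v -> 0 <= p x) ->
  nondecr_on u v p ->
  (forall x y, u <= x -> x <= y -> y <= v -> y <= w -> phi y <= phi x) ->
  (forall x y, u <= x -> x <= y -> y <= v -> w <= x -> phi x <= phi y) ->
  ex_RInt (fun x => phi x * p x) u v.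
Proof.
  intros huv h0 hp0 hp hdec hinc.
  destruct (Rle_dec w u).
  { apply prod_int; auto. left. intros x y hx hy hxy. apply hinc; lra. }
  destruct (Rle_dec v w).
  { apply prod_int; auto. right. intros x y hx hy hxy. apply hdec; lra. }
  apply ex_RInt_Chasles with w.
  - apply prod_int; try lra; try (intros; apply h0 || apply hp0; lra).
    + intros x y hx hy hxy; apply hp; lra.
    + right. intros x y hx hy hxy. apply hdec; lra.
  - apply prod_int; try lra; try (intros; apply h0 || apply hp0; lra).
    + intros x y hx hy hxy; apply hp; lra.
    + left. intros x y hx hy hxy. apply hinc; lra.
Qed.

Lemma xp_int (p : R -> R) u v : u <= v -> (forall x, u <= x <= v -> 0 <= p x) ->
  nondecr_on u v p -> ex_RInt (fun x => x * p x) u v.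
Proof.
  intros huv hp0 hp.
  assert (e1 : ex_RInt (fun x => (x - u) * p x) u v).
  { apply prod_int; auto. intros; lra. left. intros x y _ _ ?; lra. }
  assert (e2 : ex_RInt (fun x => u * p x) u v) by (apply ex_scal, nondecr_int; auto).
  apply (ex_ext (fun x => (x - u) * p x + u * p x)); auto.
  - intros; ring.
  - apply ex_plus; auto.
Qed.

Lemma refl_RI (k : R -> R) s t : ex_RInt k s t ->
  ex_RInt (fun y => k (- y)) (- t) (- s) /\ RInt (fun y => k (- y)) (- t) (- s) = RInt k s t.
Proof.
  intros h. pose proof (RInt_correct _ _ _ h) as c.
  assert (c' : is_RInt k (- - s) (- - t) (RInt k s t)) by (rewrite !Ropp_involutive; exact c).
  apply is_RInt_comp_opp in c'. apply is_RInt_swap in c'. apply is_RInt_opp in c'. rewrite opp_opp in c'.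
  assert (c2 : is_RInt (fun y => k (- y)) (- t) (- s) (RInt k s t)).
  { eapply is_RInt_ext; [|exact c'].
    - intros x _. simpl. unfold opp; simpl. ring.
  }
  split; [exists (RInt k s t); exact c2|]. now apply is_RInt_unique.
Qed.

Lemma exC1 (k : R -> R) a b c : a <= b <= c -> ex_RInt k a c -> ex_RInt k a b.
Proof. intros; now apply (ex_RInt_Chasles_1 (V := R_CompleteNormedModule)) with c. Qed.
Lemma exC2 (k : R -> R) a b c : a <= b <= c -> ex_RInt k a c -> ex_RInt k b c.
Proof. intros; now apply (ex_RInt_Chasles_2 (V := R_CompleteNormedModule)) with a. Qed.

Lemma sym_nonneg (k : R -> R) a : a < 0 -> ex_RInt k a (- a) ->
  (forall y, 0 <= y <= - a -> 0 <= k y + k (- y)) -> 0 <= RInt k a (- a).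
Proof.
  intros ha h hk.
  assert (ex1 : ex_RInt k a 0) by (apply exC1 with (- a); auto; lra).
  assert (ex2 : ex_RInt k 0 (- a)) by (apply exC2 with a; auto; lra).
  destruct (refl_RI k a 0 ex1) as [ex3 e3]. rewrite Ropp_0 in ex3, e3.
  rewrite <- (RI_Chasles k a 0 (- a)) by auto. rewrite <- e3.
  rewrite <- RI_plus by auto.
  apply RInt_ge_0; [lra| apply ex_plus; auto |].
  intros x hx. specialize (hk x ltac:(lra)). lra.
Qed.

Lemma pos_int (k : R -> R) u v s t d : u <= s -> s < t -> t <= v -> ex_RInt k u v ->
  (forall x, u <= x <= v -> 0 <= k x) -> (forall x, s <= x <= t -> d <= k x) ->
  d * (t - s) <= RInt k u v.
Proof.
  intros h1 h2 h3 h hk hd.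
  assert (e1 : ex_RInt k u s) by (apply exC1 with v; auto; lra).
  assert (e2 : ex_RInt k s v) by (apply exC2 with u; auto; lra).
  assert (e3 : ex_RInt k s t) by (apply exC1 with v; auto; lra).
  assert (e4 : ex_RInt k t v) by (apply exC2 with s; auto; lra).
  rewrite <- (RI_Chasles k u s v) by auto. rewrite <- (RI_Chasles k s t v) by auto.
  assert (0 <= RInt k u s) by (apply RInt_ge_0; auto; intros; apply hk; lra).
  assert (0 <= RInt k t v) by (apply RInt_ge_0; auto; intros; apply hk; lra).
  assert (RInt (fun _ => d) s t <= RInt k s t).
  { apply RInt_le; auto; [lra|apply ex_RInt_const|]. intros; apply hd; lra. }
  rewrite RI_const in H1. lra.
Qed.

Lemma div_le_cross (A1 B1 A2 B2 : R) : 0 < B1 -> 0 < B2 -> A1 * B2 <= A2 * B1 -> A1 / B1 <= A2 / B2.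
Proof.
  intros h1 h2 h. apply Rmult_le_reg_r with (B1 * B2); [nra|].
  replace (A1 / B1 * (B1 * B2)) with (A1 * B2) by (field; lra).
  replace (A2 / B2 * (B1 * B2)) with (A2 * B1) by (field; lra). exact h.
Qed.

Lemma three_slope (f : R -> R) b x m y : convex_on 0 b f -> 0 <= x -> x < m -> m < y -> y <= b ->
  (f m - f x) * (y - m) <= (f y - f m) * (m - x).
Proof.
  intros hc h1 h2 h3 h4.
  set (t := (y - m) / (y - x)).
  assert (ht : 0 <= t <= 1).
  { unfold t. split.
    - apply Rdiv_le_0_compat; lra.
    - apply Rmult_le_reg_r with (y - x); [lra|]. field_simplify; lra. }
  assert (hm : t * x + (1 - t) * y = m) by (unfold t; field; lra).
  pose proof (hc x y t ltac:(lra) ltac:(lra) ht) as H. rewrite hm in H.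
  assert (H' : (y - x) * f m <= (y - m) * f x + (m - x) * f y).
  { replace ((y - m) * f x + (m - x) * f y) with ((y - x) * (t * f x + (1 - t) * f y))
      by (unfold t; field; lra).
    apply Rmult_le_compat_l; lra. }
  nra.
Qed.

Lemma support (f : R -> R) b m : convex_on 0 b f -> 0 < m < b ->
  exists c, forall x, 0 <= x <= b -> f m + c * (x - m) <= f x.
Proof.
  intros hc hm.
  set (E := fun s => exists x, 0 <= x < m /\ s = (f m - f x) / (m - x)).
  assert (hb : bound E).
  { exists ((f b - f m) / (b - m)). intros s [x [hx ->]].
    apply div_le_cross; try lra. apply (three_slope f b); auto; lra. }
  assert (hne : exists s, E s) by (exists ((f m - f 0) / (m - 0)); exists 0; split; [lra|auto]).
  destruct (completeness E hb hne) as [c [hub hlub]].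
  exists c. intros x hx.
  destruct (Rtotal_order x m) as [hlt|[heq|hgt]].
  - assert (hs : (f m - f x) / (m - x) <= c) by (apply hub; exists x; split; [lra|auto]).
    assert (e : f m - f x = (f m - f x) / (m - x) * (m - x)) by (field; lra).
    assert ((f m - f x) / (m - x) * (m - x) <= c * (m - x)) by (apply Rmult_le_compat_r; lra).
    nra.
  - subst. lra.
  - assert (hs : c <= (f x - f m) / (x - m)).
    { apply hlub. intros s [z [hz ->]]. apply div_le_cross; try lra.
      apply (three_slope f b); auto; lra. }
    assert (e : f x - f m = (f x - f m) / (x - m) * (x - m)) by (field; lra).
    assert (c * (x - m) <= (f x - f m) / (x - m) * (x - m)) by (apply Rmult_le_compat_r; lra).
    nra.
Qed.

Lemma valley_of_convex (g : R -> R) b m : convex_on 0 b g -> 0 <= m <= b ->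
  (forall x, 0 <= x <= b -> 0 <= g x) -> g m = 0 ->
  (forall x y, 0 <= x -> x <= y -> y <= m -> g y <= g x) /\
  (forall x y, m <= x -> x <= y -> y <= b -> g x <= g y).
Proof.
  intros hc hm h0 hgm. split.
  - intros x y h1 h2 h3. destruct (Req_dec x m) as [->|hxm].
    { assert (y = m) by lra. subst; lra. }
    set (t := (m - y) / (m - x)).
    assert (ht : 0 <= t <= 1).
    { unfold t. split. apply Rdiv_le_0_compat; lra.
      apply Rmult_le_reg_r with (m - x); [lra|]. field_simplify; lra. }
    assert (e : t * x + (1 - t) * m = y) by (unfold t; field; lra).
    pose proof (hc x m t ltac:(lra) ltac:(lra) ht) as H. rewrite e, hgm in H.
    assert (0 <= g x) by (apply h0; lra). nra.
  - intros x y h1 h2 h3. destruct (Req_dec y m) as [->|hym].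
    { assert (x = m) by lra. subst; lra. }
    set (t := (y - x) / (y - m)).
    assert (ht : 0 <= t <= 1).
    { unfold t. split. apply Rdiv_le_0_compat; lra.
      apply Rmult_le_reg_r with (y - m); [lra|]. field_simplify; lra. }
    assert (e : t * m + (1 - t) * y = x) by (unfold t; field; lra).
    pose proof (hc m y t ltac:(lra) ltac:(lra) ht) as H. rewrite e, hgm in H.
    assert (0 <= g y) by (apply h0; lra). nra.
Qed.

Theorem corollary1 (b : R) (f p : R -> R) :
  0 < b ->
  odd_on b f ->
  convex_on 0 b f ->
  (forall x, -b <= x <= b -> 0 <= p x) ->
  nondecr_on (-b) b p ->
  (forall x, -b/3 < x <= b -> p x <> 0) ->
  forall a, -b/3 <= a < b ->
    f (RInt (fun x => x * p x) a b / RInt p a b)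
    <= RInt (fun x => f x * p x) a b / RInt p a b.
Proof.
  intros hb hodd hconv hp0 hpm hpnz a ha.
  assert (hpm' : forall u v, -b <= u -> v <= b -> nondecr_on u v p).
  { intros u v hu hv x y hx hy hxy. apply hpm; lra. }
  set (s0 := (a + b) / 2).
  assert (hps0 : 0 < p s0).
  { assert (0 <= p s0) by (apply hp0; unfold s0; lra).
    assert (p s0 <> 0) by (apply hpnz; unfold s0; lra). lra. }
  assert (hab : a <= b) by lra.
  assert (ip : ex_RInt p a b) by (apply nondecr_int; auto; apply hpm'; lra).
  assert (ixp : ex_RInt (fun x => x * p x) a b)
    by (apply xp_int; auto; [intros; apply hp0; lra| apply hpm'; lra]).
  set (P := RInt p a b). set (X := RInt (fun x => x * p x) a b).
  assert (hP : 0 < P).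
  { assert (p s0 * (b - s0) <= P).
    { apply pos_int; unfold s0 in *; auto; try lra.
      - intros; apply hp0; lra.
      - intros; apply hpm; lra. }
    unfold s0 in *. nra. }
  assert (hXb : X < b * P).
  { set (t0 := (s0 + b) / 2).
    assert (ik : ex_RInt (fun x => b * p x - x * p x) a b) by (apply ex_minus; auto; apply ex_scal; auto).
    assert (e : RInt (fun x => b * p x - x * p x) a b = b * P - X).
    { rewrite RI_minus, RI_scal; auto; apply ex_scal; auto. }
    assert ((b - t0) * p s0 * (t0 - s0) <= RInt (fun x => b * p x - x * p x) a b).
    { apply pos_int; unfold t0, s0 in *; auto; try lra.
      - intros x hx. assert (0 <= p x) by (apply hp0; lra). nra.
      - intros x hx. assert (p s0 <= p x) by (unfold s0 in *; apply hpm; lra).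
        assert (b - t0 <= b - x) by (unfold t0, s0; lra).
        replace (b * p x - x * p x) with ((b - x) * p x) by ring.
        apply Rmult_le_compat; unfold t0, s0 in *; lra. }
    assert (0 < (b - t0) * p s0 * (t0 - s0)) by (unfold t0 in *; unfold s0 in *; apply Rmult_lt_0_compat; [apply Rmult_lt_0_compat|]; lra). lra. }
  assert (hX : 0 < X).
  { destruct (Rle_dec 0 a) as [ha0|ha0].
    - assert (s0 * p s0 * (b - s0) <= X).
      { apply pos_int; unfold s0 in *; auto; try lra.
        - intros x hx. assert (0 <= p x) by (apply hp0; lra). nra.
        - intros x hx. assert (p s0 <= p x) by (unfold s0 in *; apply hpm; lra).
          unfold s0 in *; apply Rmult_le_compat; lra. }
      assert (0 < s0 * p s0 * (b - s0)) by (unfold s0 in *; apply Rmult_lt_0_compat; [apply Rmult_lt_0_compat|]; lra). lra.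
    - set (s1 := (- a + b) / 2).
      assert (hps1 : 0 < p s1).
      { assert (0 <= p s1) by (apply hp0; unfold s1; lra).
        assert (p s1 <> 0) by (apply hpnz; unfold s1; lra). lra. }
      assert (i1 : ex_RInt (fun x => x * p x) a (- a)) by (apply exC1 with b; auto; lra).
      assert (i2 : ex_RInt (fun x => x * p x) (- a) b) by (apply exC2 with a; auto; lra).
      unfold X. rewrite <- (RI_Chasles _ a (- a) b) by auto.
      assert (0 <= RInt (fun x => x * p x) a (- a)).
      { apply sym_nonneg; auto; try lra. intros y hy.
        assert (p (- y) <= p y) by (apply hpm; lra).
        replace (y * p y + - y * p (- y)) with (y * (p y - p (- y))) by ring.
        apply Rmult_le_pos; lra. }
      assert (s1 * p s1 * (b - s1) <= RInt (fun x => x * p x) (- a) b).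
      { apply pos_int; unfold s1 in *; auto; try lra.
        - intros x hx. assert (0 <= p x) by (apply hp0; lra). nra.
        - intros x hx. assert (p s1 <= p x) by (unfold s1 in *; apply hpm; lra).
          unfold s1 in *; apply Rmult_le_compat; lra. }
      assert (0 < s1 * p s1 * (b - s1)) by (unfold s1 in *; apply Rmult_lt_0_compat; [apply Rmult_lt_0_compat|]; lra). lra. }
  set (m := X / P).
  assert (hm : 0 < m < b).
  { unfold m. split.
    - apply Rdiv_lt_0_compat; lra.
    - apply Rmult_lt_reg_r with P; auto. field_simplify; lra. }
  destruct (support f b m hconv hm) as [c hc].
  assert (hf0 : f 0 = 0).
  { pose proof (hodd 0 ltac:(lra)) as h. rewrite Ropp_0 in h. lra. }
  set (L0 := f m - c * m).
  assert (hL0 : L0 <= 0) by (unfold L0; specialize (hc 0 ltac:(lra)); lra).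
  set (g := fun x => f x - (f m + c * (x - m))).
  assert (hg0 : forall x, 0 <= x <= b -> 0 <= g x) by (intros x hx; unfold g; specialize (hc x hx); lra).
  assert (hgc : convex_on 0 b g).
  { intros x y t hx hy ht. unfold g. pose proof (hconv x y t hx hy ht). nra. }
  assert (hgm : g m = 0) by (unfold g; ring).
  destruct (valley_of_convex g b m hgc ltac:(lra) hg0 hgm) as [gdec ginc].
  assert (ipos : forall u, 0 <= u -> u <= b -> ex_RInt (fun x => f x * p x) u b).
  { intros u hu hub.
    assert (i1 : ex_RInt (fun x => g x * p x) u b).
    { apply valley_int with m; [lra | intros; apply hg0; lra | intros; apply hp0; lra
        | apply hpm'; lra | intros; apply gdec; lra | intros; apply ginc; lra]. }
    assert (i2 : ex_RInt (fun x => L0 * p x + c * (x * p x)) u b).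
    { apply ex_plus; apply ex_scal.
      - apply nondecr_int; auto. apply hpm'; lra.
      - apply xp_int; auto; [intros; apply hp0; lra| apply hpm'; lra]. }
    apply (ex_ext (fun x => g x * p x + (L0 * p x + c * (x * p x)))); auto.
    - intros; unfold g, L0; ring.
    - apply ex_plus; auto. }
  assert (ifp : ex_RInt (fun x => f x * p x) a b).
  { destruct (Rle_dec 0 a) as [ha0|ha0]; [apply ipos; lra|].
    apply ex_RInt_Chasles with 0; [|apply ipos; lra].
    assert (i1 : ex_RInt (fun x => g (- x) * p x) a 0).
    { apply valley_int with (- m); [lra | intros; apply hg0; lra | intros; apply hp0; lra
        | apply hpm'; lra | intros; apply ginc; lra | intros; apply gdec; lra]. }
    assert (i2 : ex_RInt (fun x => L0 * p x - c * (x * p x)) a 0).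
    { apply ex_minus; apply ex_scal.
      - apply nondecr_int; try lra. apply hpm'; lra.
      - apply xp_int; try lra; [intros; apply hp0; lra| apply hpm'; lra]. }
    apply (ex_ext (fun x => -1 * (g (- x) * p x) - (L0 * p x - c * (x * p x)))); try lra.
    - intros x hx. rewrite <- (Ropp_involutive (f x)). rewrite <- hodd by lra.
      unfold g, L0; ring.
    - apply ex_minus; auto. apply ex_scal; auto. }
  set (k := fun x => f x * p x - (L0 * p x + c * (x * p x))).
  assert (ik : ex_RInt k a b).
  { apply ex_minus; auto. apply ex_plus; apply ex_scal; auto. }
  assert (ek : RInt k a b = RInt (fun x => f x * p x) a b - (L0 * P + c * X)).
  { unfold k. rewrite RI_minus; auto.
    - rewrite RI_plus, !RI_scal; auto; apply ex_scal; auto.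
    - apply ex_plus; apply ex_scal; auto. }
  assert (kpos : forall x, 0 <= x <= b -> 0 <= k x).
  { intros x hx. unfold k.
    replace (f x * p x - (L0 * p x + c * (x * p x))) with (g x * p x) by (unfold g, L0; ring).
    apply Rmult_le_pos; [apply hg0|apply hp0]; lra. }
  assert (hk : 0 <= RInt k a b).
  { destruct (Rle_dec 0 a) as [ha0|ha0].
    - apply RInt_ge_0; auto. intros; apply kpos; lra.
    - assert (i1 : ex_RInt k a (- a)) by (apply exC1 with b; auto; lra).
      assert (i2 : ex_RInt k (- a) b) by (apply exC2 with a; auto; lra).
      rewrite <- (RI_Chasles _ a (- a) b) by auto.
      assert (0 <= RInt k (- a) b) by (apply RInt_ge_0; auto; try lra; intros; apply kpos; lra).
      assert (0 <= RInt k a (- a)).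
      { apply sym_nonneg; auto; try lra. intros y hy.
        assert (p (- y) <= p y) by (apply hpm; lra).
        assert (0 <= p (- y)) by (apply hp0; lra).
        assert (0 <= g y) by (apply hg0; lra).
        assert (e : k y + k (- y) = g y * (p y - p (- y)) - 2 * L0 * p (- y)).
        { unfold k. rewrite hodd by lra. unfold g, L0. ring. }
        rewrite e. assert (0 <= g y * (p y - p (- y))) by (apply Rmult_le_pos; lra).
        nra. }
      lra. }
  assert (hXm : @eq R X (m * P)) by (unfold m, Rdiv; rewrite Rmult_assoc, Rinv_l by lra; symmetry; apply Rmult_1_r).
  set (I := RInt (fun x => f x * p x) a b) in *.
  assert (f m * P <= I) by (unfold L0 in *; nra).
  apply Rmult_le_reg_r with P; auto.
  replace (I / P * P) with I; [exact H|]. unfold Rdiv; rewrite Rmult_assoc, Rinv_l by lra; symmetry; apply Rmult_1_r.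
Qed.
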